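(* If $\mathcal{A}$ and $\mathcal{B}$ are leaktight probabilistic automata over the same alphabet, then their synchronised product $\mathcal{A}\times\mathcal{B}$ is leaktight.
   Context: Fix a finite alphabet $A$. Here a probabilistic automaton (ignoring initial and final states, which play no role) is a pair $(Q,\Delta)$ with $Q$ finite and $\Delta:Q\times A\to\mathcal{D}(Q)$. For $a\in A$ let $M_a(s,t)=\Delta(s,a)(t)$, for $u=a_0\cdots a_{n-1}$ let $M_u=M_{a_0}\cdots M_{a_{n-1}}$ (identity for the empty word), and $\mathbb{P}(s\xrightarrow{u}t)=M_u(s,t)$. A nonnegative $Q\times Q$ matrix $M$ is idempotent if $M(s,t)>0\iff M^2(s,t)>0$ for all $s,t$; a word $u$ is idempotent if $M_u$ is. A leak is a sequence $(u_n)$ of idempotent words such that $M_{u_n}$ converges to an idempotent matrix $M$ and there exist states $r,q$, both recurrent in the Markov chain with transition matrix $M$, with $\lim_n\mathbb{P}(r\xrightarrow{u_n}q)=0$ and $\mathbb{P}(r\xrightarrow{u_n}q)>0$ for all $n$; the automaton is leaktight if it has no leak. For $\mathcal{A}=(Q^{\mathcal{A}},\Delta^{\mathcal{A}})$ and $\mathcal{B}=(Q^{\mathcal{B}},\Delta^{\mathcal{B}})$, the synchronised product is $\mathcal{A}\times\mathcal{B}=(Q^{\mathcal{A}}\times Q^{\mathcal{B}},\Delta)$ where $\Delta((q,p),a)$ is the product distribution $\Delta((q,p),a)(q',p')=\Delta^{\mathcal{A}}(q,a)(q')\cdot\Delta^{\mathcal{B}}(p,a)(p')$. *)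

(* Defs.v *)
From HB Require Import structures.
From mathcomp Require Import all_boot all_order all_algebra.
From mathcomp Require Import all_classical all_reals topology normedtype sequences.
Set Implicit Arguments. Unset Strict Implicit. Unset Printing Implicit Defensive.
Import Order.TTheory GRing.Theory Num.Theory.
Import numFieldNormedType.Exports.
Local Open Scope classical_set_scope.
Local Open Scope ring_scope.

Section PA.
Variables (R : realType) (A : finType).

Record pa := PA {
  pa_state : finType;
  pa_delta : pa_state -> A -> pa_state -> R;
  pa_delta_ge0 : forall s a t, 0 <= pa_delta s a t;
  pa_delta_sum : forall s a, \sum_t pa_delta s a t = 1 }.

Definition mx (Q : finType) := Q -> Q -> R.
Definition mxmul (Q : finType) (M N : mx Q) : mx Q :=
  fun s t => \sum_r M s r * N r t.
Definition mxid (Q : finType) : mx Q := fun s t => (s == t)%:R.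

Definition letter_mx (P : pa) (a : A) : mx (pa_state P) :=
  fun s t => pa_delta s a t.
Definition word_mx (P : pa) (u : seq A) : mx (pa_state P) :=
  foldr (fun a M => @mxmul (pa_state P) (@letter_mx P a) M) (@mxid (pa_state P)) u.

Definition idempotent (Q : finType) (M : mx Q) : Prop :=
  forall s t, 0 < M s t <-> 0 < mxmul M M s t.

Definition mx_rel (Q : finType) (M : mx Q) : rel Q := fun s t => 0 < M s t.

Definition recurrent (Q : finType) (M : mx Q) (s : Q) : Prop :=
  forall t, connect (mx_rel M) s t -> connect (mx_rel M) t s.

Definition leak (P : pa) (u : nat -> seq A) : Prop :=
  (forall n, idempotent (@word_mx P (u n))) /\
  exists M : mx (pa_state P),
    (forall s t, (fun n => @word_mx P (u n) s t) @ \oo --> M s t) /\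
    idempotent M /\
    exists r q : pa_state P,
      recurrent M r /\ recurrent M q /\
      (fun n => @word_mx P (u n) r q) @ \oo --> (0 : R) /\
      (forall n, 0 < @word_mx P (u n) r q).

Definition leaktight (P : pa) : Prop := forall u, ~ leak P u.

Definition prod_delta (P1 P2 : pa) (s : (pa_state P1 * pa_state P2)%type) (a : A)
    (t : (pa_state P1 * pa_state P2)%type) : R :=
  pa_delta s.1 a t.1 * pa_delta s.2 a t.2.

Lemma prod_delta_ge0 (P1 P2 : pa) s a t : 0 <= @prod_delta P1 P2 s a t.
Proof. by rewrite /prod_delta mulr_ge0 // pa_delta_ge0. Qed.

Lemma prod_delta_sum (P1 P2 : pa) s a : \sum_t @prod_delta P1 P2 s a t = 1.
Proof.
rewrite /prod_delta -(pair_big xpredT xpredT (fun i j => pa_delta s.1 a i * pa_delta s.2 a j)) /=.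
under eq_bigr => i _ do rewrite -mulr_sumr pa_delta_sum mulr1.
by rewrite pa_delta_sum.
Qed.

Definition prod_pa (P1 P2 : pa) : pa :=
  @PA (pa_state P1 * pa_state P2)%type (@prod_delta P1 P2)
      (@prod_delta_ge0 P1 P2) (@prod_delta_sum P1 P2).

End PA.

(* Main.v *)
Require Import Defs.
From HB Require Import structures.
From mathcomp Require Import all_boot all_order all_algebra.
From mathcomp Require Import all_classical all_reals topology normedtype sequences.
Set Implicit Arguments. Unset Strict Implicit. Unset Printing Implicit Defensive.
Import Order.TTheory GRing.Theory Num.Theory.
Import numFieldNormedType.Exports.
Local Open Scope classical_set_scope.
Local Open Scope ring_scope.

Section Aux.
Variable R : realType.

Lemma cvg_sumf (I : finType) (f : I -> nat -> R) (l : I -> R) :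
  (forall i, f i @ \oo --> l i) ->
  (fun n => \sum_i f i n) @ \oo --> \sum_i l i.
Proof.
move=> H; apply: cvg_big => //.
move=> z; exact: add_continuous.
Qed.

Lemma lim_ge0 (f : nat -> R) l :
  (forall n, 0 <= f n) -> f @ \oo --> l -> 0 <= l.
Proof.
move=> H fl; apply: (ler_cvg_to (cvg_cst 0) fl); exact: nearW.
Qed.

Lemma uniq_lim (f : nat -> R) (a b : R) : f @ \oo --> a -> f @ \oo --> b -> a = b.
Proof. move=> ha hb; rewrite -(cvg_lim (@Rhausdorff R) ha); by rewrite (cvg_lim (@Rhausdorff R) hb). Qed.

Lemma mul_pos (a b : R) : 0 <= a -> 0 <= b -> (0 < a * b) = (0 < a) && (0 < b).
Proof.
rewrite !le_eqVlt => /predU1P[<-|ha] /predU1P[<-|hb];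
  rewrite ?mul0r ?mulr0 ?ltxx ?andbF //.
by rewrite ha hb mulr_gt0.
Qed.

Definition kron (Q1 Q2 : finType) (M1 : mx R Q1) (M2 : mx R Q2)
  : mx R (Q1 * Q2)%type :=
  fun x y => M1 x.1 y.1 * M2 x.2 y.2.

Definition stoch (Q : finType) (M : mx R Q) :=
  (forall s t, 0 <= M s t) /\ (forall s, \sum_t M s t = 1).

Lemma kron_mul (Q1 Q2 : finType) (A C : mx R Q1) (B D : mx R Q2) :
  mxmul (kron A B) (kron C D) = kron (mxmul A C) (mxmul B D).
Proof.
apply: funext => x; apply: funext => y.
rewrite /mxmul /kron big_distrlr /= pair_big /=.
by apply: eq_bigr => z _; rewrite mulrACA.
Qed.

Lemma stoch_mul (Q : finType) (A B : mx R Q) :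
  stoch A -> stoch B -> stoch (mxmul A B).
Proof.
move=> [A0 A1] [B0 B1]; split.
  by move=> s t; apply: sumr_ge0 => z _; rewrite mulr_ge0.
move=> s; rewrite /mxmul exchange_big /=.
rewrite -(A1 s); apply: eq_bigr => z _.
by rewrite -mulr_sumr B1 mulr1.
Qed.

Lemma stoch_id (Q : finType) : stoch (@mxid R Q).
Proof.
split; first by move=> s t; rewrite /mxid ler0n.
move=> s; rewrite /mxid (bigD1 s) //= eqxx big1 ?addr0 //.
by move=> t tNs; rewrite eq_sym (negbTE tNs).
Qed.

Lemma stoch_row (Q : finType) (M : mx R Q) :
  stoch M -> forall s, exists t, 0 < M s t.
Proof.
move=> [H0 H1] s.
case: (pickP (fun t => 0 < M s t)) => [t Ht|N]; first by exists t.
have : \sum_t M s t = 0.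
  apply: big1 => t _; apply/eqP; rewrite eq_le H0 andbT leNgt.
  by rewrite N.
by rewrite H1 => /eqP; rewrite oner_eq0.
Qed.

Lemma kron_idem1 (Q1 Q2 : finType) (A : mx R Q1) (B : mx R Q2)
  (x2 : Q2) : stoch A -> stoch B -> Defs.idempotent (kron A B) -> Defs.idempotent A.
Proof.
move=> sA sB; rewrite /Defs.idempotent kron_mul => H s t.
have sAA := stoch_mul sA sA; have sBB := stoch_mul sB sB.
split=> Hst.
  have [y2 Hy] := stoch_row sB x2.
  have := (H (s, x2) (t, y2)).1; rewrite /kron /= !mul_pos ?Hst ?Hy //;
    try by [case: sA | case: sB | case: sAA | case: sBB].
  by move=> /(_ isT) /andP[].
have [y2 Hy] := stoch_row sBB x2.
have := (H (s, x2) (t, y2)).2; rewrite /kron /= !mul_pos ?Hst ?Hy //;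
  try by [case: sA | case: sB | case: sAA | case: sBB].
by move=> /(_ isT) /andP[].
Qed.

Lemma kron_idem2 (Q1 Q2 : finType) (A : mx R Q1) (B : mx R Q2)
  (x1 : Q1) : stoch A -> stoch B -> Defs.idempotent (kron A B) -> Defs.idempotent B.
Proof.
move=> sA sB; rewrite /Defs.idempotent kron_mul => H s t.
have sAA := stoch_mul sA sA; have sBB := stoch_mul sB sB.
split=> Hst.
  have [y1 Hy] := stoch_row sA x1.
  have := (H (x1, s) (y1, t)).1; rewrite /kron /= !mul_pos ?Hst ?Hy //;
    try by [case: sA | case: sB | case: sAA | case: sBB].
  by move=> /(_ isT) /andP[].
have [y1 Hy] := stoch_row sAA x1.
have := (H (x1, s) (y1, t)).2; rewrite /kron /= !mul_pos ?Hst ?Hy //;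
  try by [case: sA | case: sB | case: sAA | case: sBB].
by move=> /(_ isT) /andP[].
Qed.

Lemma lift1 (Q1 Q2 : finType) (A : mx R Q1) (B : mx R Q2) :
  stoch B -> forall x1 y1, connect (mx_rel A) x1 y1 ->
  forall x2, exists y2, connect (mx_rel (kron A B)) (x1, x2) (y1, y2).
Proof.
move=> sB x1 y1 /connectP [p Hp ->] {y1}.
elim: p x1 Hp => [|z p IH] x1 /= Hp x2; first by exists x2; exact: connect0.
move/andP: Hp => [Hxz Hp].
have [z2 Hz2] := stoch_row sB x2.
have [y2 Hy] := IH z Hp z2.
exists y2; apply: connect_trans Hy; apply: connect1.
by rewrite /mx_rel /kron /= mulr_gt0.
Qed.

Lemma lift2 (Q1 Q2 : finType) (A : mx R Q1) (B : mx R Q2) :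
  stoch A -> forall x2 y2, connect (mx_rel B) x2 y2 ->
  forall x1, exists y1, connect (mx_rel (kron A B)) (x1, x2) (y1, y2).
Proof.
move=> sA x2 y2 /connectP [p Hp ->] {y2}.
elim: p x2 Hp => [|z p IH] x2 /= Hp x1; first by exists x1; exact: connect0.
move/andP: Hp => [Hxz Hp].
have [z1 Hz1] := stoch_row sA x1.
have [y1 Hy] := IH z Hp z1.
exists y1; apply: connect_trans Hy; apply: connect1.
by rewrite /mx_rel /kron /= mulr_gt0.
Qed.

Lemma proj1c (Q1 Q2 : finType) (A : mx R Q1) (B : mx R Q2) :
  stoch A -> stoch B -> forall x y, connect (mx_rel (kron A B)) x y ->
  connect (mx_rel A) x.1 y.1.
Proof.
move=> [A0 _] [B0 _] x y /connectP [p Hp ->] {y}.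
elim: p x Hp => [|z p IH] x /= Hp; first exact: connect0.
move/andP: Hp => [Hxz Hp].
apply: connect_trans (IH z Hp); apply: connect1.
by move: Hxz; rewrite /mx_rel /kron mul_pos // => /andP[].
Qed.

Lemma proj2c (Q1 Q2 : finType) (A : mx R Q1) (B : mx R Q2) :
  stoch A -> stoch B -> forall x y, connect (mx_rel (kron A B)) x y ->
  connect (mx_rel B) x.2 y.2.
Proof.
move=> [A0 _] [B0 _] x y /connectP [p Hp ->] {y}.
elim: p x Hp => [|z p IH] x /= Hp; first exact: connect0.
move/andP: Hp => [Hxz Hp].
apply: connect_trans (IH z Hp); apply: connect1.
by move: Hxz; rewrite /mx_rel /kron mul_pos // => /andP[].
Qed.

Lemma rec1 (Q1 Q2 : finType) (A : mx R Q1) (B : mx R Q2) r1 r2 :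
  stoch A -> stoch B -> recurrent (kron A B) (r1, r2) -> recurrent A r1.
Proof.
move=> sA sB H t /(lift1 sB) /(_ r2) [t2 Ht].
exact: (proj1c sA sB (H _ Ht)).
Qed.

Lemma rec2 (Q1 Q2 : finType) (A : mx R Q1) (B : mx R Q2) r1 r2 :
  stoch A -> stoch B -> recurrent (kron A B) (r1, r2) -> recurrent B r2.
Proof.
move=> sA sB H t /(lift2 sA) /(_ r1) [t1 Ht].
exact: (proj2c sA sB (H _ Ht)).
Qed.

Lemma lim_stoch (Q : finType) (W : nat -> mx R Q) (L : mx R Q) :
  (forall n, stoch (W n)) -> (forall s t, (fun n => W n s t) @ \oo --> L s t) ->
  stoch L.
Proof.
move=> sW cv; split.
  by move=> s t; apply: lim_ge0 (cv s t) => n; case: (sW n).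
move=> s; have h := @cvg_sumf Q (fun t n => W n s t) (L s) (cv s).
have E : (fun n => \sum_t W n s t) = (fun _ => 1).
  by apply: funext => n; case: (sW n) => _ ->.
rewrite E in h; apply: esym; apply: (@uniq_lim (fun _ => 1) _ _ _ h); exact: cvg_cst.
Qed.

End Aux.

Section Words.
Variables (R : realType) (A : finType).

Lemma word_prod (P1 P2 : pa R A) u :
  @word_mx R A (prod_pa P1 P2) u = kron (@word_mx R A P1 u) (@word_mx R A P2 u).
Proof.
elim: u => [|a u IH] /=.
  apply: funext => -[x1 x2]; apply: funext => -[y1 y2].
  by rewrite /mxid /kron /= xpair_eqE -natrM mulnb.
by rewrite IH -kron_mul.
Qed.

Lemma word_stoch (P : pa R A) u : stoch (@word_mx R A P u).
Proof.
elim: u => [|a u IH] /=; first exact: stoch_id.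
apply: stoch_mul IH; split=> [s t|s]; [exact: pa_delta_ge0 | exact: pa_delta_sum].
Qed.

End Words.

Theorem proposition5p2 (R : realType) (A : finType) (P1 P2 : pa R A) :
  leaktight P1 -> leaktight P2 -> leaktight (prod_pa P1 P2).
Proof.
move=> L1 L2 u [Hid [M [Hcv [HMid [[r1 r2] [[q1 q2] [Hrr [Hrq [H0 Hpos]]]]]]]]].
pose W1 := fun n => @word_mx R A P1 (u n).
pose W2 := fun n => @word_mx R A P2 (u n).
have HW n : @word_mx R A (prod_pa P1 P2) (u n) = kron (W1 n) (W2 n) by exact: word_prod.
have sW1 n : stoch (W1 n) by exact: word_stoch.
have sW2 n : stoch (W2 n) by exact: word_stoch.
pose M1 := fun s t => \sum_t2 M (s, r2) (t, t2).
pose M2 := fun s t => \sum_t1 M (r1, s) (t1, t).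
have cv1 s t : (fun n => W1 n s t) @ \oo --> M1 s t.
  have -> : (fun n => W1 n s t) =
     (fun n => \sum_t2 @word_mx R A (prod_pa P1 P2) (u n) (s, r2) (t, t2)).
    apply: funext => n; rewrite HW /kron /= -mulr_sumr.
    by case: (sW2 n) => _ ->; rewrite mulr1.
  by apply: cvg_sumf => t2; exact: Hcv.
have cv2 s t : (fun n => W2 n s t) @ \oo --> M2 s t.
  have -> : (fun n => W2 n s t) =
     (fun n => \sum_t1 @word_mx R A (prod_pa P1 P2) (u n) (r1, s) (t1, t)).
    apply: funext => n; rewrite HW /kron /= -mulr_suml.
    by case: (sW1 n) => _ ->; rewrite mul1r.
  by apply: cvg_sumf => t1; exact: Hcv.
have sM1 : stoch M1 by exact: lim_stoch sW1 cv1.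
have sM2 : stoch M2 by exact: lim_stoch sW2 cv2.
have HMk : M = kron M1 M2.
  apply: funext => x; apply: funext => y.
  apply: uniq_lim (Hcv x y) _.
  have -> : (fun n => @word_mx R A (prod_pa P1 P2) (u n) x y) =
     (fun n => W1 n x.1 y.1 * W2 n x.2 y.2).
    by apply: funext => n; rewrite HW.
  exact: (cvgM (cv1 _ _) (cv2 _ _)).
have Mrq : M (r1, r2) (q1, q2) = 0 by apply: uniq_lim (Hcv _ _) H0.
have Hp n : (0 < W1 n r1 q1) && (0 < W2 n r2 q2).
  have := Hpos n; rewrite HW /kron /= mul_pos //.
    by case: (sW1 n).
  by case: (sW2 n).
move: Mrq; rewrite HMk /kron /= => /eqP; rewrite mulf_eq0 => /orP[]/eqP E.
- apply: (L1 u); split.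
    move=> n; apply: (kron_idem1 r2 (sW1 n) (sW2 n)).
    by rewrite -HW; exact: Hid.
  exists M1; split; first exact: cv1.
  split; first by apply: (kron_idem1 r2 sM1 sM2); rewrite -HMk.
  exists r1, q1; split; first by apply: (rec1 (r2:=r2) sM1 sM2); rewrite -HMk.
  split; first by apply: (rec1 (r2:=q2) sM1 sM2); rewrite -HMk.
  split; first by rewrite -E; exact: cv1.
  by move=> n; case/andP: (Hp n).
- apply: (L2 u); split.
    move=> n; apply: (kron_idem2 r1 (sW1 n) (sW2 n)).
    by rewrite -HW; exact: Hid.
  exists M2; split; first exact: cv2.
  split; first by apply: (kron_idem2 r1 sM1 sM2); rewrite -HMk.
  exists r2, q2; split; first by apply: (rec2 (r1:=r1) sM1 sM2); rewrite -HMk.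
  split; first by apply: (rec2 (r1:=q1) sM1 sM2); rewrite -HMk.
  split; first by rewrite -E; exact: cv2.
  by move=> n; case/andP: (Hp n).
Qed.
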